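(* Let $G\in\Gamma_0(\mathbb{R}_+)$ and let $H=H_G$ be its marginal perspective function; assume $H$ is finite on $[0,\infty)^2$ and $H(u,1)>0$ for all $u\in[0,1)$. Let $a\in(0,1]$. If the function $$h(u):=\frac{(1-u^a)^{1/a}}{H(u,1)}$$ is decreasing on $[0,1)$, then $H^a$ satisfies the triangle inequality on $[0,+\infty)$, i.e. $H^a(x,z)\le H^a(x,y)+H^a(y,z)$ for all $x,y,z\ge 0$.
   Context: $\Gamma_0(\mathbb{R}_+)$ is the set of functions $F:[0,\infty)\to[0,\infty]$ that are convex, lower semicontinuous, with $F(1)=0$. For $F\in\Gamma_0(\mathbb{R}_+)$: the recession function is $\mathrm{rec}(F)(r)=\lim_{\alpha\to\infty}F(1+\alpha r)/\alpha$; the perspective function is $\hat F(r,t)=tF(r/t)$ for $t>0$ and $\hat F(r,0)=\mathrm{rec}(F)(r)$. The marginal perspective function $H_F:[0,\infty)^2\to[0,\infty]$ is the lower semicontinuous envelope of $\tilde H_F(r_1,r_2)=\inf_{\theta>0}[\hat F(\theta,r_1)+\hat F(\theta,r_2)]$; it is symmetric, jointly convex, positively $1$-homogeneous and vanishes on the diagonal. ''Decreasing'' means non-increasing. *)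

(* Defs.v *)
From Stdlib Require Import Reals Lra ClassicalEpsilon.
Open Scope R_scope.

Inductive ereal : Type := Fin (x : R) | PInf.

Definition ele (x y : ereal) : Prop :=
  match x, y with
  | _, PInf => True
  | PInf, Fin _ => False
  | Fin a, Fin b => a <= b
  end.
Definition elt (x y : ereal) : Prop := ele x y /\ x <> y.

Definition eadd (x y : ereal) : ereal :=
  match x, y with Fin a, Fin b => Fin (a + b) | _, _ => PInf end.

(* multiplication by a (strictly positive) real scalar t: t * (+oo) = +oo *)
Definition escale (t : R) (x : ereal) : ereal :=
  match x with Fin a => Fin (t * a) | PInf => PInf end.

(* real part of a finite extended real (junk value 0 at +oo) *)
Definition ereal_real (x : ereal) : R :=
  match x with Fin a => a | PInf => 0 end.

Definition is_esup (S : ereal -> Prop) (l : ereal) : Prop :=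
  (forall x, S x -> ele x l) /\ (forall u, (forall x, S x -> ele x u) -> ele l u).
Definition is_einf (S : ereal -> Prop) (l : ereal) : Prop :=
  (forall x, S x -> ele l x) /\ (forall u, (forall x, S x -> ele u x) -> ele u l).
Definition esup (S : ereal -> Prop) : ereal := epsilon (inhabits PInf) (is_esup S).
Definition einf (S : ereal -> Prop) : ereal := epsilon (inhabits PInf) (is_einf S).

Definition ecv_infty (f : R -> ereal) (l : ereal) : Prop :=
  match l with
  | Fin L => forall eps, eps > 0 -> exists M, forall al, al > M ->
               exists v, f al = Fin v /\ Rabs (v - L) < eps
  | PInf => forall K, exists M, forall al, al > M -> elt (Fin K) (f al)
  end.

Definition nonneg_valued (F : R -> ereal) : Prop :=
  forall x, 0 <= x -> ele (Fin 0) (F x).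
Definition convex_on_Rplus (F : R -> ereal) : Prop :=
  forall x y t, 0 <= x -> 0 <= y -> 0 < t < 1 ->
    ele (F (t * x + (1 - t) * y)) (eadd (escale t (F x)) (escale (1 - t) (F y))).
Definition lsc_on_Rplus (F : R -> ereal) : Prop :=
  forall x, 0 <= x -> forall c, elt (Fin c) (F x) ->
    exists d, d > 0 /\ forall y, 0 <= y -> Rabs (y - x) < d -> elt (Fin c) (F y).
Definition Gamma0 (F : R -> ereal) : Prop :=
  nonneg_valued F /\ convex_on_Rplus F /\ lsc_on_Rplus F /\ F 1 = Fin 0.

Definition recF (F : R -> ereal) (r : R) : ereal :=
  epsilon (inhabits PInf) (ecv_infty (fun al => escale (/ al) (F (1 + al * r)))).

Definition persp (F : R -> ereal) (r t : R) : ereal :=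
  if Rlt_dec 0 t then escale t (F (r / t)) else recF F r.

Definition Htilde (F : R -> ereal) (r1 r2 : R) : ereal :=
  einf (fun v => exists th, th > 0 /\ v = eadd (persp F th r1) (persp F th r2)).

Definition lsc2 (g : R -> R -> ereal) : Prop :=
  forall p1 p2, 0 <= p1 -> 0 <= p2 -> forall c, elt (Fin c) (g p1 p2) ->
    exists d, d > 0 /\ forall q1 q2, 0 <= q1 -> 0 <= q2 ->
      Rabs (q1 - p1) < d -> Rabs (q2 - p2) < d -> elt (Fin c) (g q1 q2).

(* marginal perspective H_F: lower semicontinuous envelope of Htilde on [0,+oo)^2,
   i.e. the pointwise supremum of all lsc minorants of Htilde *)
Definition HF (F : R -> ereal) (r1 r2 : R) : ereal :=
  esup (fun v => exists g : R -> R -> ereal, lsc2 g /\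
          (forall q1 q2, 0 <= q1 -> 0 <= q2 -> ele (g q1 q2) (Htilde F q1 q2)) /\
          v = g r1 r2).

(* real power x^y for x >= 0, y > 0, with 0^y = 0 *)
Definition rpow (x y : R) : R := if Rle_dec x 0 then 0 else Rpower x y.

(* Main.v *)
Require Import Defs.
From Stdlib Require Import Reals Lra Classical ClassicalEpsilon.
Open Scope R_scope.

Lemma ele_refl x : ele x x.
Proof. destruct x; simpl; lra. Qed.

Lemma ele_trans x y z : ele x y -> ele y z -> ele x z.
Proof. destruct x, y, z; simpl; intros; try lra; tauto. Qed.

Lemma ele_total x y : ele x y \/ ele y x.
Proof. destruct x, y; simpl; try lra; tauto. Qed.

Lemma not_elt x y : ~ elt x y -> ele y x.
Proof.
  unfold elt; intros H. destruct x as [a|], y as [b|]; simpl in *.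
  - destruct (Rle_dec b a); auto. exfalso; apply H; split; [lra|].
    intro E; inversion E; lra.
  - exfalso; apply H; split; auto; discriminate.
  - auto.
  - auto.
Qed.

Lemma elt_ele_contra x y : elt x y -> ele y x -> False.
Proof.
  unfold elt; destruct x as [a|], y as [b|]; simpl; intros [H1 H2] H3; try tauto.
  apply H2; f_equal; lra.
Qed.

Lemma elt_FinFin a b : elt (Fin a) (Fin b) <-> a < b.
Proof.
  unfold elt; simpl; split.
  - intros [H1 H2]. destruct (Req_dec a b); [subst; tauto| lra].
  - intros H; split; [lra| intro E; inversion E; lra].
Qed.

Lemma elt_FinP a : elt (Fin a) PInf.
Proof. split; simpl; auto; discriminate. Qed.

Lemma ele_elt_trans x y z : ele x y -> elt y z -> elt x z.
Proof.
  intros H1 H2. destruct (classic (elt x z)) as [H|H]; auto.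
  apply not_elt in H. exfalso. apply (elt_ele_contra y z H2). eapply ele_trans; eauto.
Qed.

Lemma elt_ele_trans x y z : elt x y -> ele y z -> elt x z.
Proof.
  intros H1 H2. destruct (classic (elt x z)) as [H|H]; auto.
  apply not_elt in H. exfalso. apply (elt_ele_contra x y H1). eapply ele_trans; eauto.
Qed.

Lemma ele_antisym x y : ele x y -> ele y x -> x = y.
Proof. destruct x, y; simpl; intros; try tauto. f_equal; lra. Qed.

Lemma einf_exists (S : ereal -> Prop) :
  (forall x, S x -> ele (Fin 0) x) -> exists l, is_einf S l.
Proof.
  intros Hlb.
  destruct (classic (exists v, S (Fin v))) as [[v Hv]|Hno].
  - set (E := fun y => S (Fin (- y))).
    assert (Hb : bound E).
    { exists 0. intros y Hy. specialize (Hlb _ Hy). simpl in Hlb. lra. }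
    assert (Hne : exists y, E y). { exists (- v). unfold E. rewrite Ropp_involutive. auto. }
    destruct (completeness E Hb Hne) as [m [Hm1 Hm2]].
    exists (Fin (- m)). split.
    + intros x Hx. destruct x as [w|]; simpl; auto.
      assert (E (- w)) by (unfold E; rewrite Ropp_involutive; auto).
      specialize (Hm1 _ H). lra.
    + intros u Hu. destruct u as [w|].
      * simpl. assert (m <= - w).
        { apply Hm2. intros y Hy. specialize (Hu _ Hy). simpl in Hu. lra. }
        lra.
      * specialize (Hu _ Hv). simpl in Hu. tauto.
  - exists PInf. split.
    + intros x Hx. destruct x; simpl; auto. exfalso; apply Hno; eauto.
    + intros u Hu. destruct u; simpl; auto.
Qed.

Lemma einf_spec (S : ereal -> Prop) :
  (forall x, S x -> ele (Fin 0) x) -> is_einf S (einf S).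
Proof.
  intros H. unfold einf. apply epsilon_spec. apply einf_exists; auto.
Qed.

Lemma esup_exists (S : ereal -> Prop) :
  (exists x, S x) -> exists l, is_esup S l.
Proof.
  intros [x0 Hx0].
  destruct (classic (exists K, forall x, S x -> ele x (Fin K))) as [[K HK]|Hunb].
  - assert (Hfin : forall x, S x -> exists v, x = Fin v).
    { intros x Hx. specialize (HK _ Hx). destruct x; simpl in HK; eauto; tauto. }
    set (E := fun y => S (Fin y)).
    assert (Hb : bound E). { exists K. intros y Hy. apply (HK _ Hy). }
    destruct (Hfin _ Hx0) as [v0 Hv0]; subst.
    destruct (completeness E Hb (ex_intro _ v0 Hx0)) as [m [Hm1 Hm2]].
    exists (Fin m). split.
    + intros x Hx. destruct (Hfin _ Hx) as [v ->]. simpl. apply Hm1. auto.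
    + intros u Hu. destruct u as [w|]; simpl; auto. apply Hm2.
      intros y Hy. apply (Hu _ Hy).
  - exists PInf. split.
    + intros; destruct x; simpl; auto.
    + intros u Hu. destruct u as [w|]; simpl; auto. apply Hunb. eauto.
Qed.

Lemma esup_spec (S : ereal -> Prop) : (exists x, S x) -> is_esup S (esup S).
Proof. intros H. unfold esup. apply epsilon_spec. apply esup_exists; auto. Qed.

Section Rec.
Variable G : R -> ereal.
Hypothesis HG : Gamma0 G.

Definition qf (th al : R) : ereal := escale (/ al) (G (1 + al * th)).

Lemma G_nonneg x : 0 <= x -> exists g, G x = Fin g /\ 0 <= g \/ G x = PInf.
Proof.
  intros Hx. destruct HG as [Hn _]. specialize (Hn x Hx).
  destruct (G x) as [g|]; simpl in Hn. exists g; left; auto. exists 0; right; auto.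
Qed.

Lemma G_nn x g : 0 <= x -> G x = Fin g -> 0 <= g.
Proof.
  intros Hx E. destruct HG as [Hn _]. specialize (Hn x Hx). rewrite E in Hn. exact Hn.
Qed.

Lemma qf_mono th al1 al2 : 0 < th -> 0 < al1 <= al2 -> ele (qf th al1) (qf th al2).
Proof.
  intros Hth Hal. destruct (Req_dec al1 al2) as [E|Hne].
  { subst; apply ele_refl. }
  destruct HG as [Hn [Hc [_ H1]]].
  set (t := al1 / al2).
  assert (Ht : 0 < t < 1).
  { unfold t; split. apply Rdiv_lt_0_compat; lra.
    apply (Rmult_lt_reg_r al2); [lra|]. field_simplify; lra. }
  assert (Hx : 0 <= 1 + al2 * th) by nra.
  specialize (Hc (1 + al2 * th) 1 t Hx ltac:(lra) Ht).
  replace (t * (1 + al2 * th) + (1 - t) * 1) with (1 + al1 * th) in Hc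
    by (unfold t; field; lra).
  rewrite H1 in Hc. unfold qf.
  destruct (G (1 + al2 * th)) as [g2|] eqn:E2.
  - destruct (G (1 + al1 * th)) as [g1|] eqn:E1; simpl in Hc |- *; [|tauto].
    assert (g1 <= t * g2) by lra.
    unfold t in H. apply (Rmult_le_reg_l al1); [lra|].
    replace (al1 * (/ al1 * g1)) with g1 by (field; lra).
    replace (al1 * (/ al2 * g2)) with (al1 / al2 * g2) by (field; lra). lra.
  - unfold qf; simpl; destruct (escale (/ al1) (G (1 + al1 * th))); simpl; auto.
Qed.

Lemma qf_fin_nn th al v : 0 < th -> 0 < al -> qf th al = Fin v -> 0 <= v.
Proof.
  intros Hth Hal E. unfold qf in E.
  destruct (G (1 + al * th)) as [g|] eqn:Eg; simpl in E; inversion E.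
  apply G_nn in Eg; [|nra]. apply Rmult_le_pos; auto. left; apply Rinv_0_lt_compat; lra.
Qed.

Lemma rec_exists th : 0 < th -> exists l, ecv_infty (qf th) l.
Proof.
  intros Hth.
  destruct (classic (exists al0, 0 < al0 /\ qf th al0 = PInf)) as [[al0 [H0 E0]]|Hfin].
  - exists PInf. simpl. intros K. exists al0. intros al Hal.
    assert (ele (qf th al0) (qf th al)) by (apply qf_mono; lra).
    rewrite E0 in H. destruct (qf th al); simpl in H; [tauto|]. apply elt_FinP.
  - assert (Hf : forall al, 0 < al -> exists v, qf th al = Fin v).
    { intros al Hal. destruct (qf th al) as [v|] eqn:E; eauto. exfalso; apply Hfin; eauto. }
    set (E := fun y => exists al, 0 < al /\ qf th al = Fin y).
    destruct (classic (bound E)) as [Hb|Hnb].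
    + assert (Hne : exists y, E y).
      { destruct (Hf 1 ltac:(lra)) as [v Hv]. exists v; exists 1; split; auto; lra. }
      destruct (completeness E Hb Hne) as [m [Hm1 Hm2]].
      exists (Fin m). simpl. intros eps Heps.
      destruct (classic (exists al1, 0 < al1 /\ exists v, qf th al1 = Fin v /\ m - eps < v))
        as [[al1 [Hal1 [v1 [Ev1 Hv1]]]]|Hno].
      * exists al1. intros al Hal. destruct (Hf al ltac:(lra)) as [v Hv]. exists v; split; auto.
        assert (v <= m) by (apply Hm1; exists al; split; auto; lra).
        assert (ele (qf th al1) (qf th al)) by (apply qf_mono; lra).
        rewrite Ev1, Hv in H0. simpl in H0. apply Rabs_def1; lra.
      * exfalso. assert (m <= m - eps); [|lra].
        apply Hm2. intros y [al [Hal Ey]]. destruct (Rle_dec y (m - eps)); auto.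
        exfalso; apply Hno. exists al; split; auto. exists y; split; auto; lra.
    + exists PInf. simpl. intros K.
      destruct (classic (exists al1, 0 < al1 /\ exists v, qf th al1 = Fin v /\ K < v))
        as [[al1 [Hal1 [v1 [Ev1 Hv1]]]]|Hno].
      * exists al1. intros al Hal.
        assert (ele (qf th al1) (qf th al)) by (apply qf_mono; lra).
        rewrite Ev1 in H. destruct (qf th al) as [v|]; simpl in H.
        apply elt_FinFin; lra. apply elt_FinP.
      * exfalso; apply Hnb. exists K. intros y [al [Hal Ey]].
        destruct (Rle_dec y K); auto. exfalso; apply Hno. exists al; split; auto.
        exists y; split; auto; lra.
Qed.

Lemma rec_spec th : 0 < th -> ecv_infty (qf th) (recF G th).
Proof. intros H. unfold recF. apply epsilon_spec. apply rec_exists; auto. Qed.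

Lemma ecv_nonneg th l : 0 < th -> ecv_infty (qf th) l -> ele (Fin 0) l.
Proof.
  intros Hth Hl. destruct l as [L|]; simpl; auto.
  destruct (Rle_dec 0 L); auto. exfalso.
  simpl in Hl. destruct (Hl (- L) ltac:(lra)) as [M HM].
  destruct (HM (Rmax M 1 + 1)) as [v [Ev Hv]].
  { assert (M <= Rmax M 1) by apply Rmax_l. lra. }
  apply qf_fin_nn in Ev; auto.
  2:{ assert (1 <= Rmax M 1) by apply Rmax_r. lra. }
  apply Rabs_def2 in Hv. lra.
Qed.

Lemma rec_nonneg th : 0 < th -> ele (Fin 0) (recF G th).
Proof. intros H. apply (ecv_nonneg th); auto. apply rec_spec; auto. Qed.

Lemma ecv_unique f l1 l2 : ecv_infty f l1 -> ecv_infty f l2 -> l1 = l2.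
Proof.
  intros H1 H2. destruct l1 as [L1|], l2 as [L2|]; simpl in *; auto.
  - destruct (Req_dec L1 L2) as [->|Hne]; auto. exfalso.
    set (e := Rabs (L1 - L2) / 2).
    assert (He : 0 < e). { unfold e. assert (0 < Rabs (L1 - L2)) by (apply Rabs_pos_lt; lra). lra. }
    destruct (H1 e He) as [M1 HM1]. destruct (H2 e He) as [M2 HM2].
    set (al := Rmax M1 M2 + 1).
    assert (M1 < al /\ M2 < al) by (unfold al; split; [assert (M1 <= Rmax M1 M2) by apply Rmax_l|assert (M2 <= Rmax M1 M2) by apply Rmax_r]; lra).
    destruct (HM1 al ltac:(lra)) as [v1 [E1 Hv1]]. destruct (HM2 al ltac:(lra)) as [v2 [E2 Hv2]].
    rewrite E1 in E2; inversion E2; subst.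
    assert (Rabs (L1 - L2) <= Rabs (v2 - L2) + Rabs (v2 - L1)).
    { replace (L1 - L2) with ((v2 - L2) - (v2 - L1)) by ring. apply Rabs_triang_inv2 || idtac.
      eapply Rle_trans; [apply Rabs_triang|]. rewrite Rabs_Ropp. lra. }
    unfold e in *. lra.
  - exfalso. destruct (H1 1 ltac:(lra)) as [M1 HM1]. destruct (H2 (L1 + 1)) as [M2 HM2].
    set (al := Rmax M1 M2 + 1).
    assert (M1 < al /\ M2 < al) by (unfold al; split; [assert (M1 <= Rmax M1 M2) by apply Rmax_l|assert (M2 <= Rmax M1 M2) by apply Rmax_r]; lra).
    destruct (HM1 al ltac:(lra)) as [v [E Hv]]. specialize (HM2 al ltac:(lra)).
    rewrite E in HM2. apply elt_FinFin in HM2. apply Rabs_def2 in Hv. lra.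
  - exfalso. destruct (H2 1 ltac:(lra)) as [M1 HM1]. destruct (H1 (L2 + 1)) as [M2 HM2].
    set (al := Rmax M1 M2 + 1).
    assert (M1 < al /\ M2 < al) by (unfold al; split; [assert (M1 <= Rmax M1 M2) by apply Rmax_l|assert (M2 <= Rmax M1 M2) by apply Rmax_r]; lra).
    destruct (HM1 al ltac:(lra)) as [v [E Hv]]. specialize (HM2 al ltac:(lra)).
    rewrite E in HM2. apply elt_FinFin in HM2. apply Rabs_def2 in Hv. lra.
Qed.

Lemma ecv_scale th t l : 0 < th -> 0 < t -> ecv_infty (qf th) l ->
  ecv_infty (qf (t * th)) (escale t l).
Proof.
  intros Hth Ht Hl.
  assert (Hq : forall al, 0 < al -> qf (t * th) al = escale t (qf th (al * t))).
  { intros al Hal. unfold qf. replace (1 + al * (t * th)) with (1 + al * t * th) by ring.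
    destruct (G (1 + al * t * th)); simpl; auto. f_equal. field; lra. }
  destruct l as [L|]; simpl in *.
  - intros eps Heps. destruct (Hl (eps / t) ltac:(apply Rdiv_lt_0_compat; lra)) as [M HM].
    exists (Rmax (M / t) 0). intros al Hal.
    assert (M / t <= Rmax (M / t) 0) by apply Rmax_l.
    assert (0 <= Rmax (M / t) 0) by apply Rmax_r.
    assert (Hm : al * t > M).
    { apply (Rmult_lt_reg_r (/ t)). apply Rinv_0_lt_compat; lra.
      replace (al * t * / t) with al by (field; lra). unfold Rdiv in H. lra. }
    destruct (HM _ Hm) as [v [Ev Hv]]. exists (t * v). rewrite Hq by lra. rewrite Ev.
    split; auto. replace (t * v - t * L) with (t * (v - L)) by ring.
    rewrite Rabs_mult, (Rabs_right t) by lra.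
    apply (Rmult_lt_reg_r (/ t)). apply Rinv_0_lt_compat; lra.
    replace (t * Rabs (v - L) * / t) with (Rabs (v - L)) by (field; lra). exact Hv.
  - intros K. destruct (Hl (K / t)) as [M HM].
    exists (Rmax (M / t) 0). intros al Hal.
    assert (M / t <= Rmax (M / t) 0) by apply Rmax_l.
    assert (0 <= Rmax (M / t) 0) by apply Rmax_r.
    assert (Hm : al * t > M).
    { apply (Rmult_lt_reg_r (/ t)). apply Rinv_0_lt_compat; lra.
      replace (al * t * / t) with al by (field; lra). unfold Rdiv in H. lra. }
    specialize (HM _ Hm). rewrite Hq by lra.
    destruct (qf th (al * t)) as [v|]; simpl in *. 
    + apply elt_FinFin in HM. apply elt_FinFin.
      apply (Rmult_lt_reg_r (/ t)). apply Rinv_0_lt_compat; lra.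
      replace (t * v * / t) with v by (field; lra). exact HM.
    + apply elt_FinP.
Qed.

Lemma rec_scale th t : 0 < th -> 0 < t -> recF G (t * th) = escale t (recF G th).
Proof.
  intros Hth Ht. apply (ecv_unique (qf (t * th))).
  - apply rec_spec. nra.
  - apply ecv_scale; auto. apply rec_spec; auto.
Qed.

Lemma rec_lower th B eta : 0 < th -> 0 < eta ->
  (forall s, 0 < s < eta -> ele (Fin B) (escale s (G (th / s)))) ->
  ele (Fin B) (recF G th).
Proof.
  intros Hth Heta HB.
  pose proof (rec_spec th Hth) as Hl. pose proof (rec_nonneg th Hth) as Hn.
  destruct (recF G th) as [L|]; simpl in *; auto.
  destruct (Rle_dec B L); auto. exfalso.
  destruct (Hl ((B - L) / 2) ltac:(lra)) as [M HM].
  set (al := Rmax M (/ eta) + 1).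
  assert (HaM : M < al) by (unfold al; assert (M <= Rmax M (/ eta)) by apply Rmax_l; lra).
  assert (Hae : / eta < al) by (unfold al; assert (/ eta <= Rmax M (/ eta)) by apply Rmax_r; lra).
  assert (Hal : 0 < al). { assert (0 < / eta) by (apply Rinv_0_lt_compat; lra). lra. }
  destruct (HM al HaM) as [v [Ev Hv]]. apply Rabs_def2 in Hv.
  set (s := th / (1 + al * th)).
  assert (Hs : 0 < s < eta).
  { unfold s. split. apply Rdiv_lt_0_compat; nra.
    apply (Rmult_lt_reg_r (1 + al * th)); [nra|].
    replace (th / (1 + al * th) * (1 + al * th)) with th by (field; nra).
    assert (1 < al * eta).
    { apply (Rmult_lt_compat_r eta) in Hae; [|lra]. rewrite Rinv_l in Hae; lra. }
    nra. }
  specialize (HB s Hs).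
  replace (th / s) with (1 + al * th) in HB by (unfold s; field; nra).
  unfold qf in Ev. destruct (G (1 + al * th)) as [g|] eqn:Eg; simpl in HB, Ev; [|discriminate].
  inversion Ev. assert (0 <= g) by (apply (G_nn (1 + al * th) g); [nra|auto]).
  assert (s * g <= / al * g).
  { apply Rmult_le_compat_r; auto. unfold s. 
    apply (Rmult_le_reg_r (al * (1 + al * th))); [nra|].
    replace (th / (1 + al * th) * (al * (1 + al * th))) with (al * th) by (field; nra).
    replace (/ al * (al * (1 + al * th))) with (1 + al * th) by (field; nra). lra. }
  lra.
Qed.

End Rec.

Lemma ele_PInf x : ele x PInf.
Proof. destruct x; simpl; auto. Qed.

Lemma escale_mono t x y : 0 < t -> ele x y -> ele (escale t x) (escale t y).
Proof. intros Ht; destruct x, y; simpl; auto; intros; nra. Qed.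

Lemma eadd_mono x y x' y' : ele x x' -> ele y y' -> ele (eadd x y) (eadd x' y').
Proof. destruct x, y, x', y'; simpl; auto; intros; try lra; tauto. Qed.

Lemma eadd_comm x y : eadd x y = eadd y x.
Proof. destruct x, y; simpl; auto. f_equal; ring. Qed.

Lemma escale_eadd t x y : escale t (eadd x y) = eadd (escale t x) (escale t y).
Proof. destruct x, y; simpl; auto. f_equal; ring. Qed.

Lemma escale_escale s t x : escale s (escale t x) = escale (s * t) x.
Proof. destruct x; simpl; auto. f_equal; ring. Qed.

Lemma eadd_rearr l A1 A2 B1 B2 :
  eadd (eadd (escale l A1) (escale (1 - l) A2)) (eadd (escale l B1) (escale (1 - l) B2))
  = eadd (escale l (eadd A1 B1)) (escale (1 - l) (eadd A2 B2)).
Proof. destruct A1, A2, B1, B2; simpl; auto. f_equal; ring. Qed.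

Lemma ele_fin_nn x : ele (Fin 0) x -> exists v, (x = Fin v /\ 0 <= v) \/ x = PInf.
Proof. destruct x as [v|]; simpl; intros. exists v; auto. exists 0; auto. Qed.

Section Persp.
Variable G : R -> ereal.
Hypothesis HG : Gamma0 G.

Lemma persp_pos th r : 0 < r -> persp G th r = escale r (G (th / r)).
Proof. intros Hr. unfold persp. destruct (Rlt_dec 0 r); [auto|lra]. Qed.

Lemma persp_0 th : persp G th 0 = recF G th.
Proof. unfold persp. destruct (Rlt_dec 0 0); [lra|auto]. Qed.

Lemma persp_nn th r : 0 < th -> 0 <= r -> ele (Fin 0) (persp G th r).
Proof.
  intros Hth Hr. destruct (Rle_lt_or_eq_dec 0 r Hr) as [Hr'|<-].
  - rewrite persp_pos by auto. destruct HG as [Hn _].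
    assert (0 <= th / r) by (apply Rlt_le, Rdiv_lt_0_compat; auto).
    specialize (Hn _ H). destruct (G (th / r)); simpl in *; auto. nra.
  - rewrite persp_0. apply rec_nonneg; auto.
Qed.

Lemma persp_scale t th r : 0 < t -> 0 < th -> 0 <= r ->
  persp G (t * th) (t * r) = escale t (persp G th r).
Proof.
  intros Ht Hth Hr. destruct (Rle_lt_or_eq_dec 0 r Hr) as [Hr'|<-].
  - rewrite !persp_pos by nra. rewrite escale_escale.
    replace (t * th / (t * r)) with (th / r) by (field; lra). auto.
  - rewrite Rmult_0_r, !persp_0. apply rec_scale; auto.
Qed.

Definition cand r1 r2 th := eadd (persp G th r1) (persp G th r2).
Definition Tset r1 r2 := fun v => exists th, th > 0 /\ v = cand r1 r2 th.

Lemma cand_nn r1 r2 th : 0 <= r1 -> 0 <= r2 -> 0 < th -> ele (Fin 0) (cand r1 r2 th).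
Proof.
  intros. unfold cand. pose proof (persp_nn th r1 H1 H). pose proof (persp_nn th r2 H1 H0).
  destruct (persp G th r1), (persp G th r2); simpl in *; auto. lra.
Qed.

Lemma T_spec r1 r2 : 0 <= r1 -> 0 <= r2 -> is_einf (Tset r1 r2) (Htilde G r1 r2).
Proof.
  intros. unfold Htilde. apply einf_spec. intros x [th [Hth ->]]. apply cand_nn; auto.
Qed.

Lemma T_nn r1 r2 : 0 <= r1 -> 0 <= r2 -> ele (Fin 0) (Htilde G r1 r2).
Proof.
  intros. destruct (T_spec r1 r2 H H0) as [_ H2]. apply H2.
  intros x [th [Hth ->]]. apply cand_nn; auto.
Qed.

Lemma T_le_cand r1 r2 th : 0 <= r1 -> 0 <= r2 -> 0 < th -> ele (Htilde G r1 r2) (cand r1 r2 th).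
Proof. intros. destruct (T_spec r1 r2 H H0) as [H2 _]. apply H2. exists th; split; auto. Qed.

Lemma T_glb r1 r2 u : 0 <= r1 -> 0 <= r2 -> (forall th, 0 < th -> ele u (cand r1 r2 th)) ->
  ele u (Htilde G r1 r2).
Proof. intros. destruct (T_spec r1 r2 H H0) as [_ H2]. apply H2. intros x [th [Hth ->]]; auto. Qed.

Lemma T_sym r1 r2 : 0 <= r1 -> 0 <= r2 -> ele (Htilde G r1 r2) (Htilde G r2 r1).
Proof.
  intros. apply T_glb; auto. intros th Hth. unfold cand. rewrite eadd_comm.
  apply (T_le_cand r1 r2 th); auto.
Qed.

Lemma T_scale t r1 r2 : 0 < t -> 0 <= r1 -> 0 <= r2 ->
  ele (escale t (Htilde G r1 r2)) (Htilde G (t * r1) (t * r2)).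
Proof.
  intros Ht H1 H2. apply T_glb; try nra. intros th Hth.
  replace th with (t * (th / t)) by (field; lra).
  unfold cand. rewrite !persp_scale; auto; try (apply Rdiv_lt_0_compat; lra).
  rewrite <- escale_eadd. apply escale_mono; auto. apply T_le_cand; auto.
  apply Rdiv_lt_0_compat; lra.
Qed.

Lemma T11 : ele (Htilde G 1 1) (Fin 0).
Proof.
  eapply ele_trans. apply (T_le_cand 1 1 1); lra.
  unfold cand. rewrite persp_pos by lra. destruct HG as [_ [_ [_ H1]]].
  replace (1 / 1) with 1 by field. rewrite H1. simpl. lra.
Qed.

Lemma persp_conv l th1 th2 r1 r2 : 0 < l < 1 -> 0 < th1 -> 0 < th2 -> 0 < r1 -> 0 < r2 ->
  ele (persp G (l * th1 + (1 - l) * th2) (l * r1 + (1 - l) * r2))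
      (eadd (escale l (persp G th1 r1)) (escale (1 - l) (persp G th2 r2))).
Proof.
  intros Hl H1 H2 H3 H4. set (r := l * r1 + (1 - l) * r2).
  assert (Hr : 0 < r) by (unfold r; nra).
  rewrite !persp_pos by auto.
  set (mu := l * r1 / r).
  assert (Hmu : 0 < mu < 1).
  { unfold mu; split. apply Rdiv_lt_0_compat; nra.
    apply (Rmult_lt_reg_r r); auto. unfold Rdiv. rewrite Rmult_assoc, Rinv_l by lra. unfold r; nra. }
  destruct HG as [_ [Hc _]].
  assert (0 <= th1 / r1) by (apply Rlt_le, Rdiv_lt_0_compat; auto).
  assert (0 <= th2 / r2) by (apply Rlt_le, Rdiv_lt_0_compat; auto).
  specialize (Hc (th1 / r1) (th2 / r2) mu H H0 Hmu).
  replace (mu * (th1 / r1) + (1 - mu) * (th2 / r2)) with ((l * th1 + (1 - l) * th2) / r) in Hc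
    by (unfold mu, r; field; repeat split; nra).
  destruct (G (th1 / r1)) as [g1|], (G (th2 / r2)) as [g2|]; simpl in *; auto; try apply ele_PInf.
  destruct (G ((l * th1 + (1 - l) * th2) / r)) as [g|]; simpl in *; [|tauto].
  assert (r * g <= r * (mu * g1 + (1 - mu) * g2)) by (apply Rmult_le_compat_l; lra).
  replace (r * (mu * g1 + (1 - mu) * g2)) with (l * (r1 * g1) + (1 - l) * (r2 * g2)) in H5
    by (unfold mu, r; field; nra). lra.
Qed.

Lemma T_near r1 r2 a eps : 0 <= r1 -> 0 <= r2 -> Htilde G r1 r2 = Fin a -> 0 < eps ->
  exists th, 0 < th /\ ele (cand r1 r2 th) (Fin (a + eps)).
Proof.
  intros H1 H2 E He. apply NNPP. intro Hno.
  assert (ele (Fin (a + eps)) (Htilde G r1 r2)).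
  { apply T_glb; auto. intros th Hth. apply not_elt. intro Hlt.
    apply Hno. exists th; split; auto. destruct Hlt; auto. }
  rewrite E in H. simpl in H. lra.
Qed.

Lemma T_conv l p1 p2 q1 q2 : 0 < l < 1 -> 0 < p1 -> 0 < p2 -> 0 < q1 -> 0 < q2 ->
  ele (Htilde G (l * p1 + (1 - l) * q1) (l * p2 + (1 - l) * q2))
      (eadd (escale l (Htilde G p1 p2)) (escale (1 - l) (Htilde G q1 q2))).
Proof.
  intros Hl Hp1 Hp2 Hq1 Hq2.
  destruct (Htilde G p1 p2) as [A|] eqn:EA, (Htilde G q1 q2) as [B|] eqn:EB; simpl; auto; try apply ele_PInf.
  assert (Hm1 : 0 <= l * p1 + (1 - l) * q1) by nra.
  assert (Hm2 : 0 <= l * p2 + (1 - l) * q2) by nra.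
  destruct (Htilde G (l * p1 + (1 - l) * q1) (l * p2 + (1 - l) * q2)) as [m|] eqn:Em.
  2:{ exfalso.
      destruct (T_near p1 p2 A 1 ltac:(lra) ltac:(lra) EA ltac:(lra)) as [th1 [Ht1 C1]].
      destruct (T_near q1 q2 B 1 ltac:(lra) ltac:(lra) EB ltac:(lra)) as [th2 [Ht2 C2]].
      pose proof (T_le_cand _ _ (l * th1 + (1 - l) * th2) Hm1 Hm2 ltac:(nra)) as Hc.
      rewrite Em in Hc. unfold cand in Hc, C1, C2.
      pose proof (persp_conv l th1 th2 p1 q1 Hl Ht1 Ht2 Hp1 Hq1).
      pose proof (persp_conv l th1 th2 p2 q2 Hl Ht1 Ht2 Hp2 Hq2).
      pose proof (eadd_mono _ _ _ _ H H0). rewrite eadd_rearr in H1.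
      pose proof (ele_trans _ _ _ Hc H1).
      destruct (eadd (persp G th1 p1) (persp G th1 p2)), (eadd (persp G th2 q1) (persp G th2 q2));
        simpl in *; tauto. }
  simpl. apply Rnot_lt_le. intro Hlt.
  set (eps := (m - (l * A + (1 - l) * B)) / 2).
  assert (He : 0 < eps) by (unfold eps; lra).
  destruct (T_near p1 p2 A eps ltac:(lra) ltac:(lra) EA He) as [th1 [Ht1 C1]].
  destruct (T_near q1 q2 B eps ltac:(lra) ltac:(lra) EB He) as [th2 [Ht2 C2]].
  pose proof (T_le_cand _ _ (l * th1 + (1 - l) * th2) Hm1 Hm2 ltac:(nra)) as Hc.
  rewrite Em in Hc. unfold cand in Hc, C1, C2.
  pose proof (persp_conv l th1 th2 p1 q1 Hl Ht1 Ht2 Hp1 Hq1).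
  pose proof (persp_conv l th1 th2 p2 q2 Hl Ht1 Ht2 Hp2 Hq2).
  pose proof (eadd_mono _ _ _ _ H H0). rewrite eadd_rearr in H1.
  pose proof (ele_trans _ _ _ Hc H1).
  destruct (eadd (persp G th1 p1) (persp G th1 p2)) as [c1|],
           (eadd (persp G th2 q1) (persp G th2 q2)) as [c2|]; simpl in *; try tauto.
  unfold eps in *. nra.
Qed.

End Persp.

Lemma abs_tri q p r d : Rabs (q - p) < d - Rabs (p - r) -> Rabs (q - r) < d.
Proof.
  intros H. replace (q - r) with ((q - p) + (p - r)) by ring.
  eapply Rle_lt_trans; [apply Rabs_triang|]. lra.
Qed.

Section HFsec.
Variable G : R -> ereal.
Hypothesis HG : Gamma0 G.
Hypothesis Hfin : forall x y, 0 <= x -> 0 <= y -> HF G x y <> PInf.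

Definition Sset r1 r2 := fun v => exists g : R -> R -> ereal, lsc2 g /\
          (forall q1 q2, 0 <= q1 -> 0 <= q2 -> ele (g q1 q2) (Htilde G q1 q2)) /\
          v = g r1 r2.

Lemma zero_in r1 r2 : Sset r1 r2 (Fin 0).
Proof.
  exists (fun _ _ => Fin 0). split; [|split; auto].
  - intros p1 p2 _ _ c Hc. exists 1; split; [lra|]. intros; auto.
  - intros; apply T_nn; auto.
Qed.

Lemma HF_spec r1 r2 : is_esup (Sset r1 r2) (HF G r1 r2).
Proof. unfold HF. apply esup_spec. exists (Fin 0). apply zero_in. Qed.

Definition H x y := ereal_real (HF G x y).

Lemma HF_fin x y : 0 <= x -> 0 <= y -> HF G x y = Fin (H x y).
Proof. intros. unfold H. specialize (Hfin x y H0 H1). destruct (HF G x y); simpl; tauto. Qed.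

Lemma H_nn x y : 0 <= x -> 0 <= y -> 0 <= H x y.
Proof.
  intros. destruct (HF_spec x y) as [H2 _]. specialize (H2 _ (zero_in x y)).
  rewrite HF_fin in H2 by auto. exact H2.
Qed.

Definition inbox r1 r2 d s1 s2 := 0 <= s1 /\ 0 <= s2 /\ Rabs (s1 - r1) < d /\ Rabs (s2 - r2) < d.

Lemma HF_lb r1 r2 d c : 0 <= r1 -> 0 <= r2 -> 0 < d ->
  (forall s1 s2, inbox r1 r2 d s1 s2 -> ele (Fin c) (Htilde G s1 s2)) -> c <= H r1 r2.
Proof.
  intros Hr1 Hr2 Hd Hb.
  destruct (Rle_dec c 0). { pose proof (H_nn r1 r2 Hr1 Hr2); lra. }
  set (g := fun q1 q2 => if Rlt_dec (Rabs (q1 - r1)) d then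
                           if Rlt_dec (Rabs (q2 - r2)) d then Fin c else Fin 0 else Fin 0).
  assert (Hin : Sset r1 r2 (g r1 r2)).
  { exists g; split; [|split; auto].
    - intros p1 p2 _ _ c0 Hc0. unfold g in Hc0.
      destruct (Rlt_dec (Rabs (p1 - r1)) d) as [h1|h1];
      [destruct (Rlt_dec (Rabs (p2 - r2)) d) as [h2|h2]|].
      + exists (Rmin (d - Rabs (p1 - r1)) (d - Rabs (p2 - r2))). split.
        { apply Rmin_case; lra. }
        intros q1 q2 _ _ Hq1 Hq2. unfold g.
        assert (Rmin (d - Rabs (p1 - r1)) (d - Rabs (p2 - r2)) <= d - Rabs (p1 - r1)) by apply Rmin_l.
        assert (Rmin (d - Rabs (p1 - r1)) (d - Rabs (p2 - r2)) <= d - Rabs (p2 - r2)) by apply Rmin_r.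
        destruct (Rlt_dec (Rabs (q1 - r1)) d) as [k1|k1].
        2:{ exfalso; apply k1; apply (abs_tri q1 p1); lra. }
        destruct (Rlt_dec (Rabs (q2 - r2)) d) as [k2|k2]; auto.
        exfalso; apply k2; apply (abs_tri q2 p2); lra.
      + apply elt_FinFin in Hc0. exists 1; split; [lra|]. intros q1 q2 _ _ _ _. unfold g.
        repeat destruct (Rlt_dec _ _); apply elt_FinFin; lra.
      + apply elt_FinFin in Hc0. exists 1; split; [lra|]. intros q1 q2 _ _ _ _. unfold g.
        repeat destruct (Rlt_dec _ _); apply elt_FinFin; lra.
    - intros q1 q2 Hq1 Hq2. unfold g.
      destruct (Rlt_dec (Rabs (q1 - r1)) d); [destruct (Rlt_dec (Rabs (q2 - r2)) d)|];
        try (apply T_nn; auto). apply Hb. repeat split; auto. }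
  destruct (HF_spec r1 r2) as [H1 _]. specialize (H1 _ Hin).
  unfold g in H1. rewrite Rminus_diag, Rabs_R0 in H1.
  destruct (Rlt_dec 0 d); [|lra]. rewrite HF_fin in H1 by auto. rewrite Rminus_diag, Rabs_R0 in H1. destruct (Rlt_dec 0 d); [exact H1|lra].
Qed.

Lemma HF_ub r1 r2 eps : 0 <= r1 -> 0 <= r2 -> 0 < eps ->
  exists d, 0 < d /\ forall s1 s2, inbox r1 r2 d s1 s2 ->
    elt (Fin (H r1 r2 - eps)) (Htilde G s1 s2).
Proof.
  intros Hr1 Hr2 He. apply NNPP. intro Hno.
  assert (Hall : forall d, 0 < d -> exists s1 s2, inbox r1 r2 d s1 s2 /\
            ele (Htilde G s1 s2) (Fin (H r1 r2 - eps))).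
  { intros d Hd. apply NNPP; intro Hn. apply Hno. exists d; split; auto.
    intros s1 s2 Hs. apply NNPP; intro Hn2. apply Hn. exists s1, s2; split; auto.
    apply not_elt; auto. }
  destruct (HF_spec r1 r2) as [_ H2].
  assert (ele (HF G r1 r2) (Fin (H r1 r2 - eps))).
  { apply H2. intros v [g [Hl [Hm ->]]]. apply not_elt. intro Hlt.
    destruct (Hl r1 r2 Hr1 Hr2 _ Hlt) as [d [Hd Hd2]].
    destruct (Hall d Hd) as [s1 [s2 [[h1 [h2 [h3 h4]]] Hs]]].
    specialize (Hd2 s1 s2 h1 h2 h3 h4). specialize (Hm s1 s2 h1 h2).
    apply (elt_ele_contra _ _ Hd2). eapply ele_trans; eauto. }
  rewrite HF_fin in H0 by auto. simpl in H0. lra.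
Qed.

Lemma HF_le_T r1 r2 : 0 <= r1 -> 0 <= r2 -> ele (Fin (H r1 r2)) (Htilde G r1 r2).
Proof.
  intros Hr1 Hr2. destruct (Htilde G r1 r2) as [t|] eqn:Et; simpl; auto.
  apply Rnot_lt_le. intro Hlt.
  destruct (HF_ub r1 r2 ((H r1 r2 - t) / 2) Hr1 Hr2 ltac:(lra)) as [d [Hd Hb]].
  assert (Hi : inbox r1 r2 d r1 r2) by (unfold inbox; rewrite !Rminus_diag, Rabs_R0; repeat split; auto).
  specialize (Hb r1 r2 Hi). rewrite Et in Hb. apply elt_FinFin in Hb. lra.
Qed.

Lemma HF_near r1 r2 d eps : 0 <= r1 -> 0 <= r2 -> 0 < d -> 0 < eps ->
  exists s1 s2, inbox r1 r2 d s1 s2 /\ ele (Htilde G s1 s2) (Fin (H r1 r2 + eps)).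
Proof.
  intros Hr1 Hr2 Hd He. apply NNPP; intro Hno.
  assert (H r1 r2 + eps <= H r1 r2); [|lra].
  apply (HF_lb r1 r2 d); auto. intros s1 s2 Hs.
  destruct (ele_total (Fin (H r1 r2 + eps)) (Htilde G s1 s2)); auto.
  exfalso; apply Hno; eauto.
Qed.

Lemma HF_transfer r1 r2 r1' r2' k : 0 <= r1 -> 0 <= r2 -> 0 <= r1' -> 0 <= r2' -> 0 < k ->
  (forall d, 0 < d -> exists d', 0 < d' /\ forall s1' s2', inbox r1' r2' d' s1' s2' ->
     exists s1 s2, inbox r1 r2 d s1 s2 /\ ele (escale k (Htilde G s1 s2)) (Htilde G s1' s2')) ->
  k * H r1 r2 <= H r1' r2'.
Proof.
  intros h1 h2 h3 h4 Hk Htr. apply Rnot_lt_le; intro Hlt.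
  set (eps := (k * H r1 r2 - H r1' r2') / (2 * k)).
  assert (He : 0 < eps) by (unfold eps; apply Rdiv_lt_0_compat; lra).
  destruct (HF_ub r1 r2 eps h1 h2 He) as [d [Hd Hb]].
  destruct (Htr d Hd) as [d' [Hd' Hb']].
  assert (k * (H r1 r2 - eps) <= H r1' r2').
  { apply (HF_lb r1' r2' d'); auto. intros s1' s2' Hs'.
    destruct (Hb' s1' s2' Hs') as [s1 [s2 [Hs Hle]]].
    specialize (Hb s1 s2 Hs).
    eapply ele_trans; [|exact Hle].
    destruct (Htilde G s1 s2) as [t|]; simpl; auto. apply elt_FinFin in Hb. nra. }
  assert (k * eps = (k * H r1 r2 - H r1' r2') / 2) by (unfold eps; field; lra).
  nra.
Qed.

Lemma H_sym x y : 0 <= x -> 0 <= y -> H x y = H y x.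
Proof.
  assert (Hs : forall x y, 0 <= x -> 0 <= y -> H x y <= H y x).
  { intros x0 y0 h1 h2. rewrite <- (Rmult_1_l (H x0 y0)). apply HF_transfer; auto; try lra.
    intros d Hd. exists d; split; auto. intros s1' s2' [a1 [a2 [a3 a4]]].
    exists s2', s1'. split; [repeat split; auto|].
    replace (escale 1 (Htilde G s2' s1')) with (Htilde G s2' s1')
      by (destruct (Htilde G s2' s1'); simpl; auto; f_equal; ring).
    apply (T_sym G HG s2' s1' a2 a1). }
  intros. apply Rle_antisym; auto.
Qed.

Lemma H_scale_le t x y : 0 < t -> 0 <= x -> 0 <= y -> t * H x y <= H (t * x) (t * y).
Proof.
  intros Ht hx hy. apply HF_transfer; auto; try nra.
  intros d Hd. exists (t * d); split; [nra|]. intros s1' s2' [a1 [a2 [a3 a4]]].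
  exists (s1' / t), (s2' / t). split.
  - assert (Hq : forall s r, Rabs (s - t * r) < t * d -> Rabs (s / t - r) < d).
    { intros s r Hsr. replace (s / t - r) with ((s - t * r) / t) by (field; lra).
      unfold Rdiv; rewrite Rabs_mult, Rabs_inv, (Rabs_right t) by lra.
      apply (Rmult_lt_reg_r t); auto. rewrite Rmult_assoc, Rinv_l, Rmult_1_r by lra. lra. }
    repeat split; auto; try (apply Rmult_le_pos; auto; left; apply Rinv_0_lt_compat; lra).
  - pose proof (T_scale G HG t (s1' / t) (s2' / t) Ht) as Hsc.
    replace (t * (s1' / t)) with s1' in Hsc by (field; lra).
    replace (t * (s2' / t)) with s2' in Hsc by (field; lra).
    apply Hsc; apply Rmult_le_pos; auto; left; apply Rinv_0_lt_compat; lra.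
Qed.

Lemma H_scale t x y : 0 < t -> 0 <= x -> 0 <= y -> H (t * x) (t * y) = t * H x y.
Proof.
  intros Ht hx hy. apply Rle_antisym; [|apply H_scale_le; auto].
  pose proof (H_scale_le (/ t) (t * x) (t * y) ltac:(apply Rinv_0_lt_compat; lra) ltac:(nra) ltac:(nra)).
  replace (/ t * (t * x)) with x in H0 by (field; lra).
  replace (/ t * (t * y)) with y in H0 by (field; lra).
  apply (Rmult_le_reg_l (/ t)). apply Rinv_0_lt_compat; lra.
  replace (/ t * (t * H x y)) with (H x y) by (field; lra). lra.
Qed.

Lemma H00 : H 0 0 = 0.
Proof.
  pose proof (H_scale 2 0 0 ltac:(lra) ltac:(lra) ltac:(lra)). rewrite Rmult_0_r in H0. lra.
Qed.

Lemma H11 : H 1 1 = 0.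
Proof.
  pose proof (HF_le_T 1 1 ltac:(lra) ltac:(lra)). pose proof (T11 G HG).
  pose proof (ele_trans _ _ _ H0 H1). simpl in H2. pose proof (H_nn 1 1 ltac:(lra) ltac:(lra)). lra.
Qed.

End HFsec.

Lemma abs_comb l a b d : 0 < l < 1 -> Rabs a < d -> Rabs b < d -> Rabs (l * a + (1 - l) * b) < d.
Proof.
  intros Hl Ha Hb. apply Rabs_def2 in Ha. apply Rabs_def2 in Hb. apply Rabs_def1; nra.
Qed.

Section Mono.
Variable G : R -> ereal.
Hypothesis HG : Gamma0 G.
Hypothesis Hfin : forall x y, 0 <= x -> 0 <= y -> HF G x y <> PInf.
Notation H := (H G).

Lemma H_conv l p1 p2 q1 q2 : 0 < l < 1 -> 0 < p1 -> 0 < p2 -> 0 < q1 -> 0 < q2 ->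
  H (l * p1 + (1 - l) * q1) (l * p2 + (1 - l) * q2) <= l * H p1 p2 + (1 - l) * H q1 q2.
Proof.
  intros Hl h1 h2 h3 h4.
  set (m1 := l * p1 + (1 - l) * q1). set (m2 := l * p2 + (1 - l) * q2).
  assert (Hm1 : 0 < m1) by (unfold m1; nra). assert (Hm2 : 0 < m2) by (unfold m2; nra).
  apply Rnot_lt_le; intro Hlt.
  set (eps := (H m1 m2 - (l * H p1 p2 + (1 - l) * H q1 q2)) / 3).
  assert (He : 0 < eps) by (unfold eps; lra).
  destruct (HF_ub G HG Hfin m1 m2 eps ltac:(lra) ltac:(lra) He) as [d [Hd Hb]].
  set (d0 := Rmin (Rmin d (Rmin (p1 / 2) (p2 / 2))) (Rmin (q1 / 2) (q2 / 2))).
  assert (Hd0 : 0 < d0 /\ d0 <= d /\ d0 <= p1 / 2 /\ d0 <= p2 / 2 /\ d0 <= q1 / 2 /\ d0 <= q2 / 2).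
  { unfold d0. split; [repeat apply Rmin_glb_lt; lra|].
    split; [eapply Rle_trans; [apply Rmin_l|]; apply Rmin_l|].
    split; [eapply Rle_trans; [apply Rmin_l|]; eapply Rle_trans; [apply Rmin_r|]; apply Rmin_l|].
    split; [eapply Rle_trans; [apply Rmin_l|]; eapply Rle_trans; [apply Rmin_r|]; apply Rmin_r|].
    split; [eapply Rle_trans; [apply Rmin_r|]; apply Rmin_l|].
    eapply Rle_trans; [apply Rmin_r|]; apply Rmin_r. }
  destruct Hd0 as [e0 [e1 [e2 [e3 [e4 e5]]]]].
  destruct (HF_near G HG Hfin p1 p2 d0 eps ltac:(lra) ltac:(lra) e0 He) as [s1 [s2 [[a1 [a2 [a3 a4]]] Hs]]].
  destruct (HF_near G HG Hfin q1 q2 d0 eps ltac:(lra) ltac:(lra) e0 He) as [t1 [t2 [[b1 [b2 [b3 b4]]] Ht]]].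
  assert (hs1 : 0 < s1) by (apply Rabs_def2 in a3; lra). assert (hs2 : 0 < s2) by (apply Rabs_def2 in a4; lra).
  assert (ht1 : 0 < t1) by (apply Rabs_def2 in b3; lra). assert (ht2 : 0 < t2) by (apply Rabs_def2 in b4; lra).
  assert (Hw : inbox m1 m2 d (l * s1 + (1 - l) * t1) (l * s2 + (1 - l) * t2)).
  { unfold inbox, m1, m2. repeat split; try nra.
    - replace (l * s1 + (1 - l) * t1 - (l * p1 + (1 - l) * q1)) with (l * (s1 - p1) + (1 - l) * (t1 - q1)) by ring.
      apply abs_comb; auto; lra.
    - replace (l * s2 + (1 - l) * t2 - (l * p2 + (1 - l) * q2)) with (l * (s2 - p2) + (1 - l) * (t2 - q2)) by ring.
      apply abs_comb; auto; lra. }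
  specialize (Hb _ _ Hw).
  pose proof (T_conv G HG l s1 s2 t1 t2 Hl hs1 hs2 ht1 ht2) as Hc.
  pose proof (elt_ele_trans _ _ _ Hb Hc) as Hx.
  destruct (Htilde G s1 s2) as [c1|], (Htilde G t1 t2) as [c2|]; simpl in Hs, Ht; try tauto.
  simpl in Hx. apply elt_FinFin in Hx. unfold eps in *. nra.
Qed.

Lemma f_mono_int u v : 0 < u -> u < v -> v <= 1 -> H v 1 <= H u 1.
Proof.
  intros hu huv hv. destruct (Req_dec v 1) as [->|hv1].
  { rewrite (H11 G HG Hfin). apply H_nn; auto; lra. }
  set (l := (1 - v) / (1 - u)).
  assert (Hl : 0 < l < 1).
  { unfold l; split. apply Rdiv_lt_0_compat; lra.
    apply (Rmult_lt_reg_r (1 - u)); [lra|]. field_simplify; lra. }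
  pose proof (H_conv l u 1 1 1 Hl hu ltac:(lra) ltac:(lra) ltac:(lra)) as Hc.
  replace (l * u + (1 - l) * 1) with v in Hc by (unfold l; field; lra).
  replace (l * 1 + (1 - l) * 1) with 1 in Hc by ring.
  rewrite (H11 G HG Hfin) in Hc. pose proof (H_nn G HG Hfin u 1 ltac:(lra) ltac:(lra)) as Hn. nra.
Qed.

Lemma H_hom1 x y : 0 <= x -> 0 < y -> H x y = y * H (x / y) 1.
Proof.
  intros hx hy. assert (0 <= x / y) by (unfold Rdiv; apply Rmult_le_pos; [lra|left; apply Rinv_0_lt_compat; lra]).
  rewrite <- (H_scale G HG Hfin y (x / y) 1) by lra.
  f_equal; field; lra.
Qed.

Lemma f_mono_bd v : 0 < v -> v <= 1 -> H v 1 <= H 0 1.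
Proof.
  intros hv hv1.
  assert (Hv0 : 0 <= H v 1) by (apply H_nn; auto; lra).
  assert (Key : forall d0, 0 < d0 <= 1 / 2 -> (1 - d0) * H v 1 <= H 0 1).
  { intros d0 Hd0. set (d1 := Rmin d0 (v / 2)).
    assert (Hd1 : 0 < d1 /\ d1 <= d0 /\ d1 <= v / 2).
    { unfold d1; repeat split; [apply Rmin_case; lra|apply Rmin_l|apply Rmin_r]. }
    destruct Hd1 as [f0 [f1 f2]].
    set (c := (1 - d0) * H v 1).
    assert (ClaimA : forall s1 s2, 0 < s1 -> inbox 0 1 d1 s1 s2 -> ele (Fin c) (Htilde G s1 s2)).
    { intros s1 s2 hs1 [a1 [a2 [a3 a4]]]. apply Rabs_def2 in a3. apply Rabs_def2 in a4.
      assert (hs2 : 0 < s2) by lra.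
      eapply ele_trans; [|apply (HF_le_T G HG Hfin); lra]. simpl.
      rewrite H_hom1 by lra.
      assert (Hsv : s1 / s2 <= v).
      { apply (Rmult_le_reg_r s2); auto. unfold Rdiv; rewrite Rmult_assoc, Rinv_l, Rmult_1_r by lra. nra. }
      assert (Hm : H v 1 <= H (s1 / s2) 1).
      { destruct (Req_dec (s1 / s2) v) as [E|E]; [rewrite E; lra|].
        apply f_mono_int; auto; try lra. apply Rdiv_lt_0_compat; auto. }
      unfold c. nra. }
    apply (HF_lb G HG Hfin 0 1 d1); try lra.
    intros s1 s2 Hs. destruct (Rle_lt_or_eq_dec 0 s1 (proj1 Hs)) as [hs1|<-].
    { apply ClaimA; auto. }
    destruct Hs as [a1 [a2 [a3 a4]]].
    assert (hs2 : 0 < s2) by (apply Rabs_def2 in a4; lra).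
    apply T_glb; auto; try lra. intros th Hth. unfold cand.
    rewrite persp_0, (persp_pos G th s2 hs2).
    destruct (G (th / s2)) as [g|] eqn:Eg; [|destruct (recF G th); simpl; auto].
    simpl.
    assert (ele (Fin (c - s2 * g)) (recF G th)).
    { apply (rec_lower G HG th (c - s2 * g) d1 Hth f0).
      intros s [hs hs']. 
      assert (Hin : inbox 0 1 d1 s s2).
      { repeat split; try lra. rewrite Rminus_0_r, Rabs_right; lra. }
      pose proof (ClaimA s s2 hs Hin) as HA.
      pose proof (T_le_cand G HG s s2 th ltac:(lra) ltac:(lra) Hth) as HB.
      pose proof (ele_trans _ _ _ HA HB) as HC. unfold cand in HC.
      rewrite (persp_pos G th s hs), (persp_pos G th s2 hs2), Eg in HC.
      destruct (G (th / s)); simpl in *; auto. lra. }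
    destruct (recF G th); simpl in *; auto. lra. }
  apply Rnot_lt_le; intro Hlt.
  assert (Hp : 0 < H v 1) by (pose proof (H_nn G HG Hfin 0 1 ltac:(lra) ltac:(lra)); lra).
  set (d0 := Rmin (1 / 2) ((H v 1 - H 0 1) / (2 * H v 1))).
  assert (Hd0 : 0 < d0 <= 1 / 2).
  { unfold d0; split. apply Rmin_case; [lra|apply Rdiv_lt_0_compat; lra]. apply Rmin_l. }
  specialize (Key d0 Hd0).
  assert (Hq : d0 <= (H v 1 - H 0 1) / (2 * H v 1)) by apply Rmin_r.
  assert (d0 * H v 1 <= (H v 1 - H 0 1) / 2).
  { apply (Rmult_le_compat_r (H v 1)) in Hq; [|lra].
    replace ((H v 1 - H 0 1) / (2 * H v 1) * H v 1) with ((H v 1 - H 0 1) / 2) in Hq by (field; lra).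
    lra. }
  nra.
Qed.

Lemma f_mono u v : 0 <= u -> u <= v -> v <= 1 -> H v 1 <= H u 1.
Proof.
  intros hu huv hv. destruct (Req_dec u v) as [->|Hne]; [lra|].
  destruct (Rle_lt_or_eq_dec 0 u hu) as [hu'|<-].
  - apply f_mono_int; lra.
  - apply f_mono_bd; lra.
Qed.

End Mono.

Lemma rpow_nn x p : 0 <= rpow x p.
Proof. unfold rpow. destruct (Rle_dec x 0); [lra|]. unfold Rpower. left; apply exp_pos. Qed.

Lemma rpow_0 p : rpow 0 p = 0.
Proof. unfold rpow. destruct (Rle_dec 0 0); lra. Qed.

Lemma rpow_pos x p : 0 < x -> rpow x p = Rpower x p.
Proof. intros. unfold rpow. destruct (Rle_dec x 0); [lra|auto]. Qed.

Lemma rpow_posv x p : 0 < x -> 0 < rpow x p.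
Proof. intros. rewrite rpow_pos by auto. unfold Rpower; apply exp_pos. Qed.

Lemma rpow_mono x y p : 0 <= x <= y -> 0 < p -> rpow x p <= rpow y p.
Proof.
  intros [h1 h2] hp. destruct (Rle_lt_or_eq_dec 0 x h1) as [hx|<-].
  - rewrite !rpow_pos by lra. apply Rle_Rpower_l; lra.
  - rewrite rpow_0. apply rpow_nn.
Qed.

Lemma rpow_mul x y p : 0 <= x -> 0 <= y -> rpow (x * y) p = rpow x p * rpow y p.
Proof.
  intros hx hy. destruct (Rle_lt_or_eq_dec 0 x hx) as [hx'|<-].
  2:{ rewrite Rmult_0_l, rpow_0; ring. }
  destruct (Rle_lt_or_eq_dec 0 y hy) as [hy'|<-].
  2:{ rewrite Rmult_0_r, rpow_0; ring. }
  rewrite !rpow_pos by nra. symmetry; apply Rpower_mult_distr; auto.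
Qed.

Lemma rpow_lt1 x p : 0 <= x < 1 -> 0 < p -> rpow x p < 1.
Proof.
  intros [h1 h2] hp. destruct (Rle_lt_or_eq_dec 0 x h1) as [hx|<-].
  - rewrite rpow_pos by lra.
    assert (E : Rpower 1 p = 1) by (unfold Rpower; rewrite ln_1, Rmult_0_r, exp_0; auto).
    rewrite <- E. apply Rlt_Rpower_l; lra.
  - rewrite rpow_0; lra.
Qed.

Lemma rpow_inv b a : 0 < b -> 0 < a -> rpow (rpow b (1 / a)) a = b.
Proof.
  intros hb ha. rewrite (rpow_pos b) by auto. rewrite rpow_pos by (unfold Rpower; apply exp_pos).
  rewrite Rpower_mult. replace (1 / a * a) with 1 by (field; lra). apply Rpower_1; auto.
Qed.

Section Final.
Variable G : R -> ereal.
Variable a : R.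
Hypothesis HG : Gamma0 G.
Hypothesis Hfin : forall x y, 0 <= x -> 0 <= y -> HF G x y <> PInf.
Hypothesis Hpos : forall u, 0 <= u < 1 -> elt (Fin 0) (HF G u 1).
Hypothesis Ha : 0 < a <= 1.
Hypothesis Hh : forall u v, 0 <= u -> u <= v -> v < 1 ->
     rpow (1 - rpow v a) (1 / a) / ereal_real (HF G v 1)
     <= rpow (1 - rpow u a) (1 / a) / ereal_real (HF G u 1).
Notation H := (H G).

Lemma f_pos u : 0 <= u < 1 -> 0 < H u 1.
Proof.
  intros hu. specialize (Hpos u hu). rewrite (HF_fin G Hfin) in Hpos by lra.
  apply elt_FinFin in Hpos; auto.
Qed.

Lemma step u v : 0 <= u -> u <= v -> v < 1 ->
  (1 - rpow v a) * rpow (H u 1) a <= (1 - rpow u a) * rpow (H v 1) a.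
Proof.
  intros h1 h2 h3. specialize (Hh u v h1 h2 h3). fold (H v 1) (H u 1) in Hh.
  pose proof (f_pos u ltac:(lra)) as Fu. pose proof (f_pos v ltac:(lra)) as Fv.
  assert (hU : rpow u a < 1) by (apply rpow_lt1; lra).
  assert (hV : rpow v a < 1) by (apply rpow_lt1; lra).
  set (Au := rpow (1 - rpow u a) (1 / a)) in *.
  set (Av := rpow (1 - rpow v a) (1 / a)) in *.
  assert (K : Av * H u 1 <= Au * H v 1).
  { apply (Rmult_le_compat_r (H u 1 * H v 1)) in Hh; [|nra].
    replace (Av / H v 1 * (H u 1 * H v 1)) with (Av * H u 1) in Hh by (field; lra).
    replace (Au / H u 1 * (H u 1 * H v 1)) with (Au * H v 1) in Hh by (field; lra). auto. }
  assert (X1 : 0 <= Av) by apply rpow_nn.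
  assert (K2 : rpow (Av * H u 1) a <= rpow (Au * H v 1) a) by (apply rpow_mono; [split; [nra|auto]|lra]).
  clear K; rename K2 into K.
  rewrite !rpow_mul in K by (try apply rpow_nn; lra).
  unfold Au, Av in K. rewrite !rpow_inv in K by lra. exact K.
Qed.

Lemma claim u v : 0 <= u -> u < v -> v < 1 ->
  rpow (H u 1) a <= rpow v a * rpow (H (u / v) 1) a + rpow (H v 1) a.
Proof.
  intros h1 h2 h3.
  assert (hv : 0 < v) by lra.
  assert (huv : u <= u / v).
  { apply (Rmult_le_reg_r v); auto. unfold Rdiv; rewrite Rmult_assoc, Rinv_l, Rmult_1_r by lra. nra. }
  assert (hw : u / v < 1).
  { apply (Rmult_lt_reg_r v); auto. unfold Rdiv; rewrite Rmult_assoc, Rinv_l, Rmult_1_r by lra. nra. }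
  pose proof (step u v h1 ltac:(lra) h3) as S1.
  pose proof (step u (u / v) h1 huv hw) as S2.
  assert (HU : rpow u a = rpow (u / v) a * rpow v a).
  { rewrite <- rpow_mul; [f_equal; field; lra| |lra]. lra. }
  set (U := rpow u a) in *. set (V := rpow v a) in *. set (W := rpow (u / v) a) in *.
  assert (hV : 0 < V) by (apply rpow_posv; auto).
  assert (hU1 : U < 1) by (apply rpow_lt1; lra).
  set (Pu := rpow (H u 1) a) in *. set (Pv := rpow (H v 1) a) in *. set (Pw := rpow (H (u / v) 1) a) in *.
  assert (X2 : 0 <= Pu) by apply rpow_nn. assert (X3 : 0 <= Pv) by apply rpow_nn. assert (X4 : 0 <= Pw) by apply rpow_nn.
  assert (S3 : (V - U) * Pu <= (1 - U) * (V * Pw)).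
  { rewrite HU. apply (Rmult_le_compat_l V) in S2; [|lra]. nra. }
  assert (S4 : (1 - U) * Pu <= (1 - U) * (V * Pw + Pv)) by nra.
  apply (Rmult_le_reg_l (1 - U)); lra.
Qed.

Notation D x y := (rpow (H x y) a).

Lemma H_diag x : 0 <= x -> H x x = 0.
Proof.
  intros hx. destruct (Rle_lt_or_eq_dec 0 x hx) as [h|<-].
  - rewrite (H_hom1 G HG Hfin x x) by lra. replace (x / x) with 1 by (field; lra).
    rewrite (H11 G HG Hfin). ring.
  - apply (H00 G HG Hfin).
Qed.

Lemma tri_le x y z : 0 <= x -> 0 <= y -> 0 <= z -> x <= z -> D x z <= D x y + D y z.
Proof.
  intros hx hy hz hxz.
  pose proof (rpow_nn (H x y) a) as Y14. pose proof (rpow_nn (H y z) a) as Y15.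
  destruct (Rle_lt_or_eq_dec 0 z hz) as [hz'|<-].
  2:{ assert (x = 0) by lra; subst x. rewrite (H00 G HG Hfin), rpow_0. lra. }
  assert (Hxz : H x z = z * H (x / z) 1) by (apply H_hom1; auto).
  assert (hxz1 : x / z <= 1).
  { apply (Rmult_le_reg_r z); auto. unfold Rdiv; rewrite Rmult_assoc, Rinv_l by lra. lra. }
  assert (hxz0 : 0 <= x / z) by (unfold Rdiv; apply Rmult_le_pos; [lra|left; apply Rinv_0_lt_compat; lra]).
  destruct (Rle_dec y x) as [hyx|hyx].
  -
    assert (X5 : H x z <= H y z).
    { rewrite Hxz, (H_hom1 G HG Hfin y z) by auto. apply Rmult_le_compat_l; [lra|].
      apply (f_mono G HG Hfin); auto.
      + unfold Rdiv; apply Rmult_le_pos; [lra|left; apply Rinv_0_lt_compat; lra].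
      + unfold Rdiv; apply Rmult_le_compat_r; [left; apply Rinv_0_lt_compat; lra|lra]. }
    assert (X6 : D x z <= D y z) by (apply rpow_mono; [split; [apply H_nn|]|]; auto; lra).
    lra.
  - destruct (Rle_dec z y) as [hzy|hzy].
    +
      assert (hy' : 0 < y) by lra.
      assert (X7 : H x z <= H x y).
      { rewrite Hxz, (H_hom1 G HG Hfin x y) by auto.
        assert (X8 : x / y <= x / z).
        { unfold Rdiv. apply Rmult_le_compat_l; auto. apply Rinv_le_contravar; lra. }
        assert (X9 : 0 <= x / y) by (unfold Rdiv; apply Rmult_le_pos; [lra|left; apply Rinv_0_lt_compat; lra]).
        assert (X10 : H (x / z) 1 <= H (x / y) 1) by (apply (f_mono G HG Hfin); lra).
        assert (X11 : 0 <= H (x / z) 1) by (apply H_nn; auto; lra).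
        nra. }
      assert (X12 : D x z <= D x y) by (apply rpow_mono; [split; [apply H_nn|]|]; auto; lra).
      lra.
    +
      assert (hy' : 0 < y) by lra.
      destruct (Req_dec x y) as [<-|hne]; [lra|].
      set (u := x / z). set (v := y / z).
      assert (hv1 : v < 1).
      { unfold v. apply (Rmult_lt_reg_r z); auto. unfold Rdiv; rewrite Rmult_assoc, Rinv_l by lra. lra. }
      assert (huv : u < v).
      { unfold u, v. unfold Rdiv. apply Rmult_lt_compat_r; [apply Rinv_0_lt_compat|]; lra. }
      pose proof (claim u v hxz0 huv hv1) as C.
      assert (Ew : u / v = x / y) by (unfold u, v; field; lra).
      rewrite Ew in C.
      assert (Hxy : H x y = y * H (x / y) 1) by (apply H_hom1; auto).
      assert (Hyz : H y z = z * H v 1) by (apply H_hom1; auto).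
      rewrite Hxz, Hxy, Hyz.
      assert (X13 : 0 <= x / y) by (unfold Rdiv; apply Rmult_le_pos; [lra|left; apply Rinv_0_lt_compat; lra]).
      assert (hv0 : 0 <= v) by (unfold v, Rdiv; apply Rmult_le_pos; [lra|left; apply Rinv_0_lt_compat; lra]).
      assert (hHv : 0 <= H v 1) by (apply H_nn; auto; lra).
      rewrite !rpow_mul; try lra; try (apply H_nn; auto; lra).
      assert (Ey : rpow y a = rpow v a * rpow z a).
      { rewrite <- rpow_mul; [f_equal; unfold v; field; lra| |lra].
        unfold v, Rdiv; apply Rmult_le_pos; [lra|left; apply Rinv_0_lt_compat; lra]. }
      rewrite Ey. fold u.
      pose proof (rpow_nn z a) as Y16.
      apply (Rmult_le_compat_l (rpow z a)) in C; auto. nra.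
Qed.

Lemma tri x y z : 0 <= x -> 0 <= y -> 0 <= z -> D x z <= D x y + D y z.
Proof.
  intros hx hy hz. destruct (Rle_dec x z).
  - apply tri_le; auto.
  - rewrite (H_sym G HG Hfin x z), (H_sym G HG Hfin x y), (H_sym G HG Hfin y z) by auto.
    pose proof (tri_le z y x hz hy hx ltac:(lra)) as Y17. lra.
Qed.

End Final.

Theorem mainTheorem2 (G : R -> ereal) (a : R) :
  Gamma0 G ->
  (forall x y, 0 <= x -> 0 <= y -> HF G x y <> PInf) ->
  (forall u, 0 <= u < 1 -> elt (Fin 0) (HF G u 1)) ->
  0 < a <= 1 ->
  (forall u v, 0 <= u -> u <= v -> v < 1 ->
     rpow (1 - rpow v a) (1 / a) / ereal_real (HF G v 1)
     <= rpow (1 - rpow u a) (1 / a) / ereal_real (HF G u 1)) ->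
  forall x y z, 0 <= x -> 0 <= y -> 0 <= z ->
    rpow (ereal_real (HF G x z)) a
    <= rpow (ereal_real (HF G x y)) a + rpow (ereal_real (HF G y z)) a.
Proof.
  intros HG Hfin Hpos Ha Hh x y z hx hy hz.
  exact (tri G a HG Hfin Hpos Ha Hh x y z hx hy hz).
Qed.
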